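(* Let $q$ be an odd prime power with characteristic $p$, let $1\le n\le q^2-1$, and write $n=u+vq$ with $0\le u,v\le q-1$. Define \[ \mathrm{II}=\sum_{\substack{\alpha,\beta\ge 0,\ \beta\le q-2\\ 0<\alpha+\beta\le q-1}}\ \sum_{\substack{k\ge 1,\ j\ge 0\\ k+j\le q-1\\ 2k-j\equiv\alpha+\beta\pmod{q-1}\\ q(q-1)+k-j-(\alpha+\beta q)=n}}2^{\alpha+\beta}\binom{2(q-1)-\alpha-\beta}{q-1}\binom{q-1-k}{j}(-1)^j . \] Then in $\mathbb F_p$, \[ \mathrm{II}=\sum_{\substack{0\le s\le 2\\ \max\{0,\,v-s+\frac{u+v}{q-1}\}<\alpha\le\min\{q-1,\,v-s+\frac{u+v}{q-1}+1\}}}\binom{u+v-(s+\alpha-v-1)(q-1)}{(s+2\alpha-2v)(q-1)-2(u+v)}, \] the sum being over integers $s,\alpha$ in the indicated ranges.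
   Context: For integers $m\ge 0$ and $k$, $\binom mk$ is the usual binomial coefficient, equal to $0$ unless $0\le k\le m$; integers are interpreted in $\mathbb F_p$. *)

(* Defs.v *)
From mathcomp Require Import all_boot all_order all_algebra.
Set Implicit Arguments. Unset Strict Implicit. Unset Printing Implicit Defensive.
Import Order.TTheory GRing.Theory Num.Theory.

Definition binz (m k : int) : nat :=
  if ((0 <= k) && (k <= m))%R then 'C(`|m|%N, `|k|%N) else 0%N.

Local Open Scope ring_scope.

Definition sumII (p q n : nat) : 'F_p :=
  \sum_(a < q) \sum_(b < q.-1)
    \sum_(k < q) \sum_(j < q |
        [&& (0 < a + b)%N, (a + b <= q - 1)%N,
            (1 <= k)%N, (k + j <= q - 1)%N,
            (((2 * k)%:Z - j%:Z == (a + b)%:Z %[mod (q - 1)%N%:Z])%Z) &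
            ((q * (q - 1) + k)%N%:Z - j%:Z - (a + b * q)%:Z == n%:Z)])
      ((2 : 'F_p) ^+ (a + b) * ('C((2 * (q - 1) - a - b)%N, (q - 1)%N))%:R
        * ('C((q - 1 - k)%N, j))%:R * (-1 : 'F_p) ^+ j).

Definition sumRHS (p q u v : nat) : 'F_p :=
  \sum_(s < 3) \sum_(a < q |
      let c : rat := v%:Q - s%:Q + (u + v)%:Q / (q - 1)%N%:Q in
      [&& (0 < a%:Q), (c < a%:Q), (a%:Q <= (q - 1)%N%:Q) & (a%:Q <= c + 1)])
    (binz ((u + v)%:Z - (s%:Z + a%:Z - v%:Z - 1%:Z) * (q - 1)%N%:Z)
          ((s%:Z + 2%:Z * a%:Z - 2%:Z * v%:Z) * (q - 1)%N%:Z - 2%:Z * (u + v)%:Z))%:R.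

(* Main.v *)
Require Import Defs.
From mathcomp Require Import all_boot all_order all_algebra all_field.
From mathcomp Require Import zify.
Set Implicit Arguments. Unset Strict Implicit. Unset Printing Implicit Defensive.
Import GRing.Theory Num.Theory.
Local Open Scope ring_scope.

Lemma dvd_binq p e j : prime p -> (0 < j < p ^ e)%N -> (p %| 'C(p ^ e, j))%N.
Proof.
move=> pp /andP[j0 jq].
have E := mul_bin_diag (p ^ e) j.-1.
rewrite prednK // in E.
apply/negPn/negP => nd.
have cop : coprime (p ^ e) 'C(p ^ e, j) by apply: coprimeXl; rewrite prime_coprime.
have : (p ^ e %| j * 'C(p ^ e, j))%N by rewrite -E dvdn_mulr.
rewrite Gauss_dvdl // => /(dvdn_leq j0).
by rewrite leqNgt jq.
Qed.

Lemma lucas0 p e i : prime p -> (0 < i)%N -> (i <= p ^ e - 2)%N ->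
  ('C(2 * (p ^ e - 1) - i, p ^ e - 1)%:R : 'F_p) = 0.
Proof.
move=> pp i0 iq.
set q := (p ^ e)%N in iq *.
have q2 : (2 < q)%N by lia.
apply/eqP; rewrite -(dvdn_pcharf (pchar_Fp pp)).
have -> : (2 * (q - 1) - i = q + (q - 2 - i))%N by lia.
have -> : (q - 1 = (q - 2).+1)%N by lia.
rewrite -binomial.Vandermonde.
apply: dvdn_sum => j _.
case: (posnP j) => [->|jp].
  rewrite [X in (_ * X)%N]bin_small ?muln0 //.
  lia.
apply: dvdn_mulr; apply: dvd_binq => //.
have := ltn_ord j; rewrite -/q; clearbody q; lia.
Qed.

Lemma two_pow p e : prime p -> odd p -> (2 : 'F_p) ^+ (p ^ e - 1) = 1.
Proof.
move=> pp op.
have h : forall x : 'F_p, x ^+ (p ^ e) = x.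
  move=> x; elim: e => [|e IH]; first by rewrite expn0 expr1.
  by rewrite expnSr exprM IH; have := expf_card x; rewrite card_Fp.
have n2 : (2 : 'F_p) != 0.
  rewrite -(dvdn_pcharf (pchar_Fp pp)); apply/negP => /(dvdn_leq (isT : (0 < 2)%N)) le.
  have p2 := prime_gt1 pp.
  have : p = 2%N by lia.
  by move=> e2; rewrite e2 in op.
apply: (mulIf n2); rewrite mul1r -exprSr subn1 prednK ?h //.
by rewrite expn_gt0 prime_gt0.
Qed.

Lemma binzE (x y : nat) : binz x%:Z y%:Z = 'C(x, y).
Proof.
rewrite /binz; case: ifP => [/andP[_ h]|h] //.
by rewrite bin_small //; move/negbT: h; lia.
Qed.

Lemma ltQ (x y : int) : ((x%:~R : rat) < y%:~R) = (x < y). Proof. by rewrite ltr_int. Qed.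
Lemma leQ (x y : int) : ((x%:~R : rat) <= y%:~R) = (x <= y). Proof. by rewrite ler_int. Qed.

Lemma Qconv (q u v s a : nat) : (1 < q)%N ->
  [&& 0 < a%:Q, (v%:Q - s%:Q + (u + v)%:Q / (q - 1)%N%:Q) < a%:Q, a%:Q <= (q - 1)%N%:Q
                   & a%:Q <= (v%:Q - s%:Q + (u + v)%:Q / (q - 1)%N%:Q) + 1]
  = [&& (0 < a)%N, ((u + v)%:Z < (a%:Z + s%:Z - v%:Z) * (q - 1)%N%:Z), (a <= q - 1)%N
       & ((a%:Z + s%:Z - v%:Z - 1) * (q - 1)%N%:Z <= (u + v)%:Z)].
Proof.
move=> q1.
have w0 : (0 : rat) < (q - 1)%N%:Q by rewrite ltr0n; lia.
have wn : ((q - 1)%N%:Q : rat) != 0 := lt0r_neq0 w0.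
set c := (v%:Q - s%:Q + (u + v)%:Q / (q - 1)%N%:Q).
have cw : c * (q - 1)%N%:Q = ((v%:Z - s%:Z) * (q - 1)%N%:Z + (u + v)%:Z)%:~R.
  by rewrite /c mulrDl mulfVK // intrD intrM intrB.
have h2 : (c < a%:Q) = ((v%:Z - s%:Z) * (q - 1)%N%:Z + (u + v)%:Z < a%:Z * (q - 1)%N%:Z).
  by rewrite -(ltr_pM2r w0) cw -intrM ltQ.
have h4 : (a%:Q <= c + 1) = (a%:Z * (q - 1)%N%:Z <= (v%:Z - s%:Z) * (q - 1)%N%:Z + (u + v)%:Z + (q - 1)%N%:Z).
  by rewrite -(ler_pM2r w0) mulrDl mul1r cw -intrM -intrD leQ.
rewrite h2 h4 ltr0n ler_nat.
apply/idP/idP => /and4P[x1 x2 x3 x4]; apply/and4P; split => //; lia.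
Qed.

Lemma sum_if_const (V : nmodType) N (c : bool) (F : 'I_N -> V) :
  \sum_(i < N) (if c then F i else 0) = if c then \sum_(i < N) F i else 0.
Proof. by case: c => //; rewrite big1. Qed.

Lemma sum_eqZ (V : nmodType) N (X : int) (Y : V) :
  \sum_(i < N) (if i%:Z == X then Y else 0) = if (0 <= X) && (X < N%:Z) then Y else 0.
Proof.
case: ifP => H.
  have iN : (`|X| < N)%N by lia.
  rewrite (bigD1 (Ordinal iN)) //= ifT; last by apply/eqP; lia.
  rewrite big1 ?addr0 // => i /eqP ne; case: ifP => // /eqP ei.
  by case: ne; apply: val_inj => /=; lia.
rewrite big1 // => i _; case: ifP => // /eqP ei.
have := ltn_ord i; move/negbT: H; lia.
Qed.

Lemma sum3 (V : nmodType) N1 N2 N3 (B K J : int) (Y : V) :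
  \sum_(b < N1) \sum_(k < N2) \sum_(j < N3)
     (if b%:Z == B then if k%:Z == K then if j%:Z == J then Y else 0 else 0 else 0)
  = if [&& 0 <= B, B < N1%:Z, 0 <= K, K < N2%:Z, 0 <= J & J < N3%:Z] then Y else 0.
Proof.
under eq_bigr => b _.
  under eq_bigr => k _ do rewrite sum_if_const sum_if_const sum_eqZ.
  rewrite sum_if_const sum_eqZ.
over.
rewrite sum_eqZ.
by case: (0 <= B); case: (B < N1%:Z); case: (0 <= K); case: (K < N2%:Z);
  case: (0 <= J); case: (J < N3%:Z).
Qed.
Definition QZ (q u v s a : nat) : bool :=
  [&& (0 < a)%N, ((u + v)%:Z < (a%:Z + s%:Z - v%:Z) * (q - 1)%N%:Z), (a <= q - 1)%N
       & ((a%:Z + s%:Z - v%:Z - 1) * (q - 1)%N%:Z <= (u + v)%:Z)].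
Definition Kz (q u v s a : nat) : int := (a%:Z + s%:Z - v%:Z) * (q - 1)%N%:Z - (u + v)%:Z.
Definition Jz (q u v s a : nat) : int := 2 * Kz q u v s a - s%:Z * (q - 1)%N%:Z.
Definition Rz (p q u v s a : nat) : 'F_p :=
  (binz ((u + v)%:Z - (s%:Z + a%:Z - v%:Z - 1%:Z) * (q - 1)%N%:Z)
          ((s%:Z + 2%:Z * a%:Z - 2%:Z * v%:Z) * (q - 1)%N%:Z - 2%:Z * (u + v)%:Z))%:R.
Definition G (p q u v s a b k j : nat) : 'F_p :=
  if QZ q u v s a then if b%:Z == q%:Z - 1 - a%:Z then if k%:Z == Kz q u v s a then
    if j%:Z == Jz q u v s a then Rz p q u v s a else 0 else 0 else 0 else 0.

Lemma collapse p q u v s a : (3 <= q)%N ->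
  (if QZ q u v s a then Rz p q u v s a else 0) =
  \sum_(b < q.-1) \sum_(k < q) \sum_(j < q) G p q u v s a b k j.
Proof.
move=> q3; rewrite /G; case hQ: (QZ q u v s a); last first.
  by rewrite big1 // => b _; rewrite big1 // => k _; rewrite big1.
rewrite sum3; move: hQ; rewrite /QZ /Jz /Kz => hQ.
case: ifP => // H.
rewrite /Rz /binz ifF //; apply/negbTE; move/negbT: H; lia.
Qed.

Definition E (q n a b k j s : nat) : bool :=
  [&& (0 < k)%N, (k + j <= q - 1)%N, ((2 * k)%:Z - j%:Z == s%:Z * (q - 1)%N%:Z)
     & ((q * (q - 1) + k)%N%:Z - j%:Z - (a + b * q)%:Z == n%:Z)].

Lemma step_i p q n u v a b k j s : (3 <= q)%N -> odd q -> n = (u + v * q)%N ->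
  (u <= q - 1)%N -> (v <= q - 1)%N -> (a + b = q - 1)%N ->
  (a < q)%N -> (b < q.-1)%N -> (k < q)%N -> (j < q)%N ->
  G p q u v s a b k j = if E q n a b k j s then ('C((q - 1 - k)%N, j))%:R * (-1 : 'F_p) ^+ j else 0.
Proof.
move=> q3 oq hn hu hv hab ha hb hk hj.
rewrite /G /QZ /Jz /Kz /Rz.
case: q q3 oq hn hu hv hab ha hb hk hj => [//|w] q3 oq hn hu hv hab ha hb hk hj.
rewrite ?subn1 ?succnK /= in hu hv hab hb *.
have hbw : (b * w + a * w = w * w)%N by rewrite -mulnDl addnC hab.
case hE: (E _ _ _ _ _ _ _); move: hE; rewrite /E ?subn1 ?succnK /= => hE.
  rewrite ifT; last by lia.
  rewrite ifT; last by lia.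
  rewrite ifT; last by lia.
  rewrite ifT; last by lia.
  rewrite (_ : _ - _ = (w - k)%N%:Z); last by lia.
  rewrite (_ : _ - _ = j%:Z); last by lia.
  by rewrite binzE -signr_odd (_ : odd j = false) ?mulr1 //; lia.
case: ifP => // h1; case: ifP => // h2; case: ifP => // h3; case: ifP => // h4.
rewrite (_ : _ - _ = (w - k)%N%:Z); last by lia.
rewrite (_ : _ - _ = j%:Z); last by lia.
by rewrite binzE bin_small //; lia.
Qed.

Lemma step_ii p q n a b k j (C : 'F_p) : (3 <= q)%N -> (a + b = q - 1)%N ->
  (if [&& (0 < a + b)%N, (a + b <= q - 1)%N,
            (1 <= k)%N, (k + j <= q - 1)%N,
            (((2 * k)%:Z - j%:Z == (a + b)%:Z %[mod (q - 1)%N%:Z])%Z) &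
            ((q * (q - 1) + k)%N%:Z - j%:Z - (a + b * q)%:Z == n%:Z)]
   then C else 0) = \sum_(s < 3) (if E q n a b k j s then C else 0).
Proof.
move=> q3 hab.
rewrite !big_ord_recr big_ord0 /= [0 + _]add0r.
case hP: [&& _, _, _, _, _ & _].
  have hP' := hP.
  case/andP: hP' => _ /andP[_ /andP[h1 /andP[h2 /andP[]]]].
  rewrite eqz_mod_dvd => /dvdzP[m hm] h4.
  have : m = -1 \/ m = 0 \/ m = 1 by nia.
  rewrite /E => hmc.
  do 3 (case: ifP => ?); rewrite ?add0r ?addr0 //; exfalso; lia.
have EP : forall s : nat, E q n a b k j s -> [&& (0 < a + b)%N, (a + b <= q - 1)%N,
            (1 <= k)%N, (k + j <= q - 1)%N,
            (((2 * k)%:Z - j%:Z == (a + b)%:Z %[mod (q - 1)%N%:Z])%Z) &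
            ((q * (q - 1) + k)%N%:Z - j%:Z - (a + b * q)%:Z == n%:Z)].
  move=> s; rewrite /E => /and4P[e1 e2 e3 e4].
  rewrite e1 e2 e4 andbT /=.
  apply/andP; split; first lia.
  apply/andP; split; first lia.
  rewrite eqz_mod_dvd; apply/dvdzP; exists (s%:Z - 1); lia.
case: ifP => h0; first by rewrite (EP _ h0) in hP.
case: ifP => h1; first by rewrite (EP _ h1) in hP.
case: ifP => h2; first by rewrite (EP _ h2) in hP.
by rewrite !addr0.
Qed.

Lemma pointwise p q n u v a b k j : (3 <= q)%N -> odd q -> n = (u + v * q)%N ->
  (u <= q - 1)%N -> (v <= q - 1)%N ->
  (forall i, (0 < i)%N -> (i <= q - 2)%N -> ('C(2 * (q - 1) - i, q - 1)%:R : 'F_p) = 0) ->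
  (2 : 'F_p) ^+ (q - 1) = 1 ->
  (a < q)%N -> (b < q.-1)%N -> (k < q)%N -> (j < q)%N ->
  (if [&& (0 < a + b)%N, (a + b <= q - 1)%N,
            (1 <= k)%N, (k + j <= q - 1)%N,
            (((2 * k)%:Z - j%:Z == (a + b)%:Z %[mod (q - 1)%N%:Z])%Z) &
            ((q * (q - 1) + k)%N%:Z - j%:Z - (a + b * q)%:Z == n%:Z)]
   then (2 : 'F_p) ^+ (a + b) * ('C((2 * (q - 1) - a - b)%N, (q - 1)%N))%:R
        * ('C((q - 1 - k)%N, j))%:R * (-1 : 'F_p) ^+ j else 0)
  = \sum_(s < 3) G p q u v s a b k j.
Proof.
move=> q3 oq hn hu hv hl h2 ha hb hk hj.
case: (eqVneq (a + b)%N (q - 1)%N) => hab.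
  rewrite (eq_bigr (fun s : 'I_3 => (if E q n a b k j s then
     ('C((q - 1 - k)%N, j))%:R * (-1) ^+ j else 0 : 'F_p))); last first.
    by move=> s _; apply: step_i.
  rewrite -step_ii //; case: ifP => // _.
  rewrite -subnDA hab (_ : (2 * (q - 1) - (q - 1) = q - 1)%N) ?binn ?h2; last by lia.
  by rewrite !mul1r.
rewrite big1 => [|s _].
  case: ifP => // hP; rewrite -subnDA hl; [by rewrite !(mulr0, mul0r) | lia | lia].
rewrite /G /QZ; case: ifP => // hq; rewrite ifF //; apply/negbTE; lia.
Qed.


Theorem lemma4p2 (p e n u v : nat) :
  prime p -> odd p -> (0 < e)%N ->
  let q := (p ^ e)%N in
  (1 <= n <= q ^ 2 - 1)%N ->
  (u <= q - 1)%N -> (v <= q - 1)%N -> n = (u + v * q)%N ->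
  sumII p q n = sumRHS p q u v.
Proof.
move=> pp op e0 q hn1 hu hv hn.
have p3 : (3 <= p)%N by have := prime_gt1 pp; lia.
have q3 : (3 <= q)%N.
  apply: leq_trans p3 _; rewrite /q -{1}(expn1 p) leq_pexp2l //; lia.
have oq : odd q by rewrite /q oddX op orbT.
have hl : forall i, (0 < i)%N -> (i <= q - 2)%N ->
    ('C(2 * (q - 1) - i, q - 1)%:R : 'F_p) = 0 by move=> i; exact: lucas0.
have h2 : (2 : 'F_p) ^+ (q - 1) = 1 by exact: two_pow.
clearbody q.
rewrite /sumII /sumRHS.
transitivity (\sum_(a < q) \sum_(b < q.-1) \sum_(k < q) \sum_(j < q) \sum_(s < 3)
                G p q u v s a b k j).
  apply: eq_bigr => a _; apply: eq_bigr => b _; apply: eq_bigr => k _.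
  rewrite big_mkcond; apply: eq_bigr => j _.
  by apply: pointwise.
symmetry.
transitivity (\sum_(s < 3) \sum_(a < q) (if QZ q u v s a then Rz p q u v s a else 0)).
  apply: eq_bigr => s _; rewrite big_mkcond; apply: eq_bigr => a _.
  by rewrite /= Qconv //; lia.
rewrite exchange_big; apply: eq_bigr => a _.
under eq_bigr => s _ do rewrite collapse //.
rewrite exchange_big; apply: eq_bigr => b _.
rewrite exchange_big; apply: eq_bigr => k _.
by rewrite exchange_big.
Qed.
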